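(* Let $A\in\mathbb{R}^{nd\times nd}$ be symmetric with $d\times d$ blocks $A_{ij}$, $A_{ii}=I_d$, let $p>d$, and $f(S)=\sum_{i,j}\langle A_{ij},S_iS_j^{\top}\rangle$ on $\{S\in\mathbb{R}^{nd\times p}: S_iS_i^{\top}=I_d\ \forall i\}$. If $S$ is a local maximizer of $f$, then \[ \Lambda_{ii}:=\frac12\sum_{j=1}^n(S_iS_j^{\top}A_{ji}+A_{ij}S_jS_i^{\top})\succeq I_d\quad\text{for all }1\le i\le n. \]
   Context: $S_i$ is the $i$-th $d\times p$ block of $S$; $\langle X,Y\rangle=\mathrm{Tr}(XY^{\top})$; $\succeq$ is the Loewner order. *)

(* Defs.v *)
From mathcomp Require Import all_boot all_order all_algebra.
From mathcomp Require Import reals.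
Set Implicit Arguments. Unset Strict Implicit. Unset Printing Implicit Defensive.
Import Order.TTheory GRing.Theory Num.Theory.
Local Open Scope ring_scope.

(* A block matrix in R^{nd x nd} is represented by its d x d blocks A i j;
   S in R^{nd x p} is represented by its d x p blocks S i. *)

Definition frob_inner (R : realType) (m k : nat) (X Y : 'M[R]_(m, k)) : R :=
  \tr (X *m Y^T).

Definition block_sym (R : realType) (n d : nat) (A : 'I_n -> 'I_n -> 'M[R]_d) :=
  forall i j, (A i j)^T = A j i.

Definition fobj (R : realType) (n d p : nat) (A : 'I_n -> 'I_n -> 'M[R]_d)
  (S : 'I_n -> 'M[R]_(d, p)) : R :=
  \sum_(i < n) \sum_(j < n) frob_inner (A i j) (S i *m (S j)^T).

Definition feasible (R : realType) (n d p : nat) (S : 'I_n -> 'M[R]_(d, p)) :=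
  forall i, S i *m (S i)^T = 1%:M.

(* local maximizer on the feasible set (Euclidean topology of R^{nd x p},
   expressed entrywise) *)
Definition local_max (R : realType) (n d p : nat) (A : 'I_n -> 'I_n -> 'M[R]_d)
  (S : 'I_n -> 'M[R]_(d, p)) :=
  feasible S /\
  exists eps : R, 0 < eps /\
    forall T : 'I_n -> 'M[R]_(d, p), feasible T ->
      (forall i a b, `|T i a b - S i a b| < eps) ->
      fobj A T <= fobj A S.

Definition psd (R : realType) (d : nat) (M : 'M[R]_d) :=
  M^T = M /\ forall v : 'rV[R]_d, 0 <= (v *m M *m v^T) 0 0.

Definition loewner_ge (R : realType) (d : nat) (X Y : 'M[R]_d) := psd (X - Y).

Definition Lambda (R : realType) (n d p : nat) (A : 'I_n -> 'I_n -> 'M[R]_d)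
  (S : 'I_n -> 'M[R]_(d, p)) (i : 'I_n) : 'M[R]_d :=
  2^-1 *: \sum_(j < n) (S i *m (S j)^T *m A j i + A i j *m S j *m (S i)^T).

(* Main.v *)
Require Import Defs.
From mathcomp Require Import all_boot all_order all_algebra.
From mathcomp Require Import reals.
From mathcomp Require Import ring lra.
Import Order.TTheory GRing.Theory Num.Theory.
Local Open Scope ring_scope.

Lemma sum_sel (R : realType) n (F : 'I_n -> R) i :
  \sum_j (j == i)%:R * F j = F i.
Proof.
rewrite (bigD1 i) //= eqxx mul1r big1 ?addr0 // => j /negbTE ->; by rewrite mul0r.
Qed.

Lemma term_exp (R : realType) d p (Ajk : 'M[R]_d) (Sj Sk D : 'M[R]_(d,p)) (ej ek : R) :
  \tr (Ajk *m ((Sj + ej *: D) *m (Sk + ek *: D)^T)^T) =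
  \tr (Ajk *m (Sj *m Sk^T)^T) + ej * \tr (Ajk *m (Sk *m D^T))
  + ek * \tr (Ajk *m (D *m Sj^T)) + ej * ek * \tr (Ajk *m (D *m D^T)).
Proof.
rewrite !trmx_mul !trmxK !linearD /= !linearZ /=.
rewrite !mulmxDl !mulmxDr -!scalemxAl -!scalemxAr; rewrite ?mulmxDr -?scalemxAr ?scalerA.
rewrite !mxtraceD !mxtraceZ.
ring.
Qed.

Lemma fobj_pert (R : realType) n d p (A : 'I_n -> 'I_n -> 'M[R]_d)
  (S : 'I_n -> 'M[R]_(d, p)) i (D : 'M[R]_(d,p)) : block_sym A ->
  fobj A (fun k => S k + (k == i)%:R *: D) =
  fobj A S + 2 * \tr ((\sum_k A i k *m S k) *m D^T) + \tr (A i i *m (D *m D^T)).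
Proof.
move=> hA; rewrite /fobj /frob_inner.
under eq_bigr => j _ do under eq_bigr => k _ do rewrite term_exp.
under eq_bigr => j _ do rewrite big_split big_split big_split /=.
rewrite !big_split /=.
have -> : \sum_j \sum_k (j == i)%:R * \tr (A j k *m (S k *m D^T)) =
   \tr ((\sum_k A i k *m S k) *m D^T).
  under eq_bigr => j _ do rewrite -mulr_sumr.
  rewrite (_ : \sum_j _ = \sum_k \tr (A i k *m (S k *m D^T))); last first.
    exact: (@sum_sel _ _ (fun j => \sum_k \tr (A j k *m (S k *m D^T))) i).
  rewrite mulmx_suml linear_sum /=.
  by apply: eq_bigr => k _; rewrite mulmxA.
have -> : \sum_j \sum_k (k == i)%:R * \tr (A j k *m (D *m (S j)^T)) =
   \tr ((\sum_k A i k *m S k) *m D^T).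
  under eq_bigr => j _ do rewrite (@sum_sel _ _ (fun k => \tr (A j k *m (D *m (S j)^T))) i).
  rewrite mulmx_suml linear_sum /=.
  apply: eq_bigr => k _.
  by rewrite -mxtrace_tr !trmx_mul trmxK hA mxtrace_mulC mulmxA.
have -> : \sum_j \sum_k (j == i)%:R * (k == i)%:R * \tr (A j k *m (D *m D^T)) =
   \tr (A i i *m (D *m D^T)).
  under eq_bigr => j _ do under eq_bigr => k _ do rewrite -mulrA.
  under eq_bigr => j _ do rewrite -mulr_sumr (@sum_sel _ _ (fun k => \tr (A j k *m (D *m D^T))) i).
  exact: (@sum_sel _ _ (fun j => \tr (A j i *m (D *m D^T))) i).
by rewrite mulr2n; ring.
Qed.
Lemma tr11 (R : realType) (M : 'M[R]_1) : \tr M = M 0 0.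
Proof. by rewrite /mxtrace big_ord1. Qed.

Lemma sq_ge0 (R : realType) p (u : 'rV[R]_p) : 0 <= (u *m u^T) 0 0.
Proof. rewrite mxE; apply: sumr_ge0 => k _; rewrite mxE; by rewrite -expr2 sqr_ge0. Qed.

Lemma sq_gt0 (R : realType) p (u : 'rV[R]_p) : u != 0 -> 0 < (u *m u^T) 0 0.
Proof.
move=> unz.
have [k hk] : exists k, u 0 k != 0.
  apply/existsP; apply: contraR unz; rewrite negb_exists => /forallP h.
  apply/eqP/matrixP => a b; rewrite ord1 mxE; have := h b; by rewrite negbK => /eqP.
rewrite mxE (bigD1 k) //= mxE.
apply: (@lt_le_trans _ _ (u 0 k * u 0 k)).
  by rewrite lt_def -expr2 sqr_ge0 andbT expf_neq0.
rewrite lerDl; apply: sumr_ge0 => j _; rewrite mxE; by rewrite -expr2 sqr_ge0.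
Qed.

Lemma ker_ex (R : realType) d p (S : 'M[R]_(d,p)) : (d < p)%N ->
  exists u : 'rV[R]_p, u != 0 /\ S *m u^T = 0.
Proof.
move=> hdp.
have : kermx S^T != 0.
  rewrite -mxrank_eq0 mxrank_ker mxrank_tr subn_eq0 -ltnNge.
  exact: leq_ltn_trans (rank_leq_row S) hdp.
case/rowV0Pn => u /sub_kermxP hu unz; exists u; split => //.
by rewrite -(trmxK (S *m u^T)) trmx_mul trmxK hu trmx0.
Qed.

Lemma entry_le (R : realType) a b (M : 'M[R]_(a,b)) x y :
  `|M x y| <= \sum_x' \sum_y' `|M x' y'|.
Proof.
rewrite (bigD1 x) //= (bigD1 y) //= -addrA lerDl.
apply: addr_ge0; first by apply: sumr_ge0 => *.
by apply: sumr_ge0 => *; apply: sumr_ge0 => *.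
Qed.

Lemma entryBZ (R : realType) a b' (X Y : 'M[R]_(a,b')) (c1 c2 : R) x y :
  (c1 *: X - c2 *: Y) x y = c1 * X x y - c2 * Y x y.
Proof. by rewrite !mxE. Qed.

Theorem lemma3 (R : realType) (n d p : nat)
  (A : 'I_n -> 'I_n -> 'M[R]_d) (S : 'I_n -> 'M[R]_(d, p)) :
  block_sym A ->
  (forall i, A i i = 1%:M) ->
  (d < p)%N ->
  local_max A S ->
  forall i : 'I_n, loewner_ge (Lambda A S i) 1%:M.
Proof.
move=> hA hAii hdp [feasS [eps [eps0 hmax]]] i.
pose Si := S i.
pose G : 'M[R]_(d,p) := \sum_k A i k *m S k.
have hL : Lambda A S i = 2^-1 *: ((G *m Si^T)^T + G *m Si^T).
  rewrite /Lambda big_split /=.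
  have E1 : \sum_(j < n) S i *m (S j)^T *m A j i = (G *m Si^T)^T.
    rewrite /G /Si trmx_mul trmxK linear_sum /= mulmx_sumr; apply: eq_bigr => j _.
    by rewrite trmx_mul (hA i j) mulmxA.
  by rewrite E1 /G /Si mulmx_suml.
rewrite /loewner_ge /psd hL; split.
  by rewrite linearB /= trmx1 linearZ /= linearD /= trmxK [(G *m Si^T) + _]addrC.
move=> v.
set gq := (v *m (G *m Si^T) *m v^T) 0 0.
set q := (v *m v^T) 0 0.
have hgoal : (v *m (2^-1 *: ((G *m Si^T)^T + G *m Si^T) - 1%:M) *m v^T) 0 0 = gq - q.
  rewrite mulmxBr mulmxBl mulmx1 -scalemxAr -scalemxAl mulmxDr mulmxDl mxE [in LHS]mxE.
  rewrite [X in 2^-1 * X]mxE.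
  have -> : (v *m (G *m Si^T)^T *m v^T) 0 0 = gq.
    rewrite /gq; transitivity (((v *m (G *m Si^T) *m v^T)^T) 0 0); last by rewrite mxE.
    by rewrite !trmx_mul !trmxK mulmxA.
  rewrite [(- (v *m v^T)) 0 0]mxE -/gq -/q; by field.
rewrite hgoal subr_ge0.
have [u0 [u0nz hSu0]] := @ker_ex _ _ _ Si hdp.
pose b0 := (v *m G *m u0^T) 0 0.
pose u := if 0 <= b0 then u0 else - u0.
have hSu : Si *m u^T = 0.
  by rewrite /u; case: ifP => _ //; rewrite linearN /= mulmxN hSu0 oppr0.
have hb : 0 <= (v *m G *m u^T) 0 0.
  rewrite /u; case: ifP => h //; rewrite linearN /= mulmxN mxE oppr_ge0.
  by rewrite -/b0 ltW // ltNge h.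
have unz : u != 0 by rewrite /u; case: ifP => _ //; rewrite oppr_eq0.
pose m := (u *m u^T) 0 0.
have m0 : 0 < m := @sq_gt0 _ _ u unz.
have q0 : 0 <= q := @sq_ge0 _ _ v.
pose V := v^T *m v.
pose M1 := v^T *m (v *m Si).
pose M2 := v^T *m u.
have hSS : Si *m Si^T = 1%:M := feasS i.
have hSM1 : Si *m M1^T = V.
  by rewrite /M1 /V !trmx_mul trmxK !mulmxA hSS mul1mx.
have hM1S : M1 *m Si^T = V.
  by rewrite /M1 /V -!mulmxA hSS mulmx1.
have hSM2 : Si *m M2^T = 0.
  by rewrite /M2 trmx_mul trmxK mulmxA hSu mul0mx.
have hM2S : M2 *m Si^T = 0.
  rewrite /M2 -mulmxA -[u *m Si^T]trmxK trmx_mul trmxK hSu trmx0 mulmx0 //.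
have hM1M1 : M1 *m M1^T = q *: V.
  rewrite /M1 /V !trmx_mul trmxK.
  rewrite -!mulmxA [Si *m (Si^T *m _)]mulmxA hSS mul1mx !mulmxA.
  by rewrite -(mulmxA v^T v v^T) (mx11_scalar (v *m v^T)) mul_mx_scalar -scalemxAl.
have hM2M2 : M2 *m M2^T = m *: V.
  rewrite /M2 /V trmx_mul trmxK -mulmxA [u *m _]mulmxA (mx11_scalar (u *m u^T)).
  by rewrite mul_scalar_mx -scalemxAr.
have hM1M2 : M1 *m M2^T = 0.
  by rewrite /M1 /M2 trmx_mul trmxK -!mulmxA [Si *m (u^T *m v)]mulmxA hSu mul0mx !mulmx0.
have hM2M1 : M2 *m M1^T = 0.
  by rewrite -[M2 *m M1^T]trmxK trmx_mul trmxK hM1M2 trmx0.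
pose C := 1 + \sum_x \sum_y `|M1 x y| + \sum_x \sum_y `|M2 x y|.
have hC1 : forall x y, `|M1 x y| <= C.
  move=> x y; rewrite /C -addrA (addrC 1) -addrA; apply: (le_trans (@entry_le _ _ _ M1 x y)).
  rewrite lerDl; apply: addr_ge0 => //; by apply: sumr_ge0 => *; apply: sumr_ge0 => *.
have hC2 : forall x y, `|M2 x y| <= C.
  move=> x y; rewrite /C addrC; apply: (le_trans (@entry_le _ _ _ M2 x y)).
  rewrite lerDl; apply: addr_ge0 => //; by apply: sumr_ge0 => *; apply: sumr_ge0 => *.
have C1 : 1 <= C.
  rewrite /C -addrA lerDl; apply: addr_ge0; by apply: sumr_ge0 => *; apply: sumr_ge0 => *.
pose mn := Num.min eps 1.
have mn0 : 0 < mn by rewrite /mn lt_min eps0 ltr01.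
have mne : mn <= eps by rewrite /mn ge_min lexx.
have mn1 : mn <= 1 by rewrite /mn ge_min lexx orbT.
pose K := 4 * (m + 1) * C.
have K0 : 0 < K by rewrite /K; apply: mulr_gt0; [apply: mulr_gt0; lra | lra].
pose r := mn / K.
have hrK : r * K = mn by rewrite /r divfK // gt_eqF.
have r0 : 0 < r by rewrite /r divr_gt0.
have r1 : r <= 1.
  rewrite /r ler_pdivrMr // mul1r; apply: (le_trans mn1).
  rewrite /K; nra.
pose e := 1 + m * q * (r * r).
have e1 : 1 <= e by rewrite /e lerDl; apply: mulr_ge0; [apply: mulr_ge0; lra | nra].
have e0 : e != 0 by apply/eqP => h; rewrite h in e1; lra.
pose al := 2 * m * (r * r) / e.
pose be := 2 * r / e.
have al0 : 0 < al by rewrite /al divr_gt0 //; [apply: mulr_gt0; [lra | nra] | lra].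
have be0 : 0 <= be by rewrite /be divr_ge0 //; lra.
have hale : al * e = 2 * m * (r * r) by rewrite /al divfK.
have hbee : be * e = 2 * r by rewrite /be divfK.
have hcoef : be * be * m + al * al * q = 2 * al.
  by rewrite /al /be /e; field.
clearbody al be.
pose D := be *: M2 - al *: M1.
have hDt : D^T = be *: M2^T - al *: M1^T by rewrite /D linearB /= !linearZ.
have hSD : Si *m D^T = - (al *: V).
  by rewrite hDt mulmxBr -!scalemxAr hSM2 hSM1 scaler0 sub0r.
have hDS : D *m Si^T = - (al *: V).
  by rewrite /D mulmxBl -!scalemxAl hM2S hM1S scaler0 sub0r.
have hDD : D *m D^T = (2 * al) *: V.
  rewrite hDt /D mulmxBl !mulmxBr -!scalemxAl -!scalemxAr hM2M2 hM2M1 hM1M2 hM1M1.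
  rewrite !scaler0 !subr0 sub0r opprK !scalerA -scalerDl -hcoef.
  by congr (_ *: _); ring.
pose T := fun k => S k + (k == i)%:R *: D.
have feasT : feasible T.
  move=> k; rewrite /T; case: (eqVneq k i) => [->|hki].
    rewrite ?eqxx scale1r linearD /= mulmxDl !mulmxDr -/Si hSS hSD hDS hDD.
    apply/matrixP => x y; rewrite !mxE; ring.
  by rewrite ?(negbTE hki) scale0r addr0 feasS.
have closeT : forall k a b, `|T k a b - S k a b| < eps.
  move=> k a b; rewrite /T [X in X - _]mxE addrAC subrr add0r [X in `|X|]mxE.
  have hDab : `|D a b| < eps.
    rewrite /D entryBZ.
    apply: (le_lt_trans (ler_normB _ _)).
    rewrite !normrM (ger0_norm be0) (gtr0_norm al0).
    have h1 : be * `|M2 a b| <= be * C by apply: ler_wpM2l.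
    have h2 : al * `|M1 a b| <= al * C by apply: ler_wpM2l => //; lra.
    have h3 : be <= 2 * r by rewrite -hbee; nra.
    have h4 : al <= 2 * m * r by nra.
    have h5 : be * C <= 2 * r * C by apply: ler_wpM2r; lra.
    have h6 : al * C <= 2 * m * r * C by apply: ler_wpM2r; lra.
    move: hrK; rewrite /K => hrK.
    nra.
  case: (k == i); first by rewrite mul1r.
  by rewrite mul0r normr0.
have := hmax T feasT closeT.
rewrite /T fobj_pert // hAii mul1mx -addrA gerDl.
rewrite -/G hDD mxtraceZ.
have htrV : \tr V = q by rewrite /V mxtrace_mulC tr11.
have htrG : \tr (G *m D^T) = be * (v *m G *m u^T) 0 0 - al * gq.
  rewrite hDt mulmxBr -!scalemxAr linearB /= !mxtraceZ.
  congr (be * _ - al * _).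
    rewrite /M2 trmx_mul trmxK mulmxA mxtrace_mulC tr11 mulmxA; reflexivity.
  rewrite /M1 !trmx_mul trmxK !mulmxA mxtrace_mulC tr11 !mulmxA /gq !mulmxA; reflexivity.
rewrite htrG htrV => hle.
have hbb : 0 <= be * (v *m G *m u^T) 0 0 by apply: mulr_ge0.
have : al * (q - gq) <= 0 by nra.
by rewrite pmulr_rle0 // subr_le0.
Qed.
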